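(* Let $w\in\mathcal L_n$. If $q'$ and $q$ are valid steps for $w$ in $\mathcal L$ with $q'<q$, then $\gcd(q,q')$ is also a valid step for $w$ in $\mathcal L$. In particular the minimal valid step of $w$ divides every valid step of $w$.
   Context: $\mathcal L$ is a language over a finite alphabet $\mathcal A$ (nonempty finite words, containing $\mathcal A$, closed under subwords, every word extendable on both sides), $\mathcal L_n$ its words of length $n$. For $n\ge2$, $w\in\mathcal A^n$ and an integer $1\le q\le n/2$ with $w_{[q+1,n]}=w_{[1,n-q]}$, $w^{q\ast r}$ is the word of length $n+(r-1)q$ with $(w^{q\ast r})_{[q(i-1)+1,q(i-1)+n]}=w$ for $1\le i\le r$; $q$ is a valid step for $w$ in $\mathcal L$ if moreover $w^{q\ast2}\in\mathcal L$. The minimal step of $w$ is the least valid step. *)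

(* Defs.v *)
From mathcomp Require Import all_boot.
Set Implicit Arguments. Unset Strict Implicit. Unset Printing Implicit Defensive.

Definition is_language (A : finType) (L : seq A -> Prop) : Prop :=
  [/\ (forall w, L w -> w <> [::]),
      (forall a : A, L [:: a]),
      (forall u x v : seq A, L (u ++ x ++ v) -> x <> [::] -> L x)
    & (forall w, L w -> exists a b : A, L (a :: rcons w b))].

(* w^{q*r}: the word of length n + (r-1) q whose windows of length n
   starting at positions q(i-1)+1 (1 <= i <= r) all equal w
   (well defined when w has period q). *)
Fixpoint qpow (A : Type) (w : seq A) (q r : nat) : seq A :=
  match r with
  | 0 | 1 => w
  | r'.+1 => take q w ++ qpow w q r'
  end.

Definition valid_step (A : finType) (L : seq A -> Prop) (w : seq A) (q : nat) : Prop :=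
  [/\ 2 <= size w, 1 <= q, q.*2 <= size w,
      drop q w = take (size w - q) w
    & L (qpow w q 2)].

Definition minimal_step (A : finType) (L : seq A -> Prop) (w : seq A) (m : nat) : Prop :=
  valid_step L w m /\ (forall q, valid_step L w q -> m <= q).

(* Main.v *)
Require Import Defs.
From mathcomp Require Import all_boot.
From mathcomp Require Import zify.

Definition per {A : Type} (w : seq A) p :=
  forall x0 i, i + p < size w -> nth x0 w i = nth x0 w (i + p).

Lemma per_of_eq (A : Type) (w : seq A) p :
  drop p w = take (size w - p) w -> per w p.
Proof.
move=> E x0 i Hi.
have := congr1 (fun s => nth x0 s i) E => /=.
rewrite nth_drop nth_take; last by lia.
by rewrite addnC => ->.
Qed.

Lemma eq_of_per (A : Type) (w : seq A) p :
  per w p -> drop p w = take (size w - p) w.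
Proof.
move=> P.
case: w P => [|x0 s] P; first by [].
apply: (@eq_from_nth _ x0).
  by rewrite size_drop size_takel // leq_subr.
move=> i; rewrite size_drop => Hi.
rewrite nth_drop nth_take // addnC.
have h : i + p < size (x0 :: s) by rewrite addnC -ltn_subRL.
by rewrite (P x0 i h).
Qed.

Lemma per_sub (A : Type) (w : seq A) p q :
  per w p -> per w q -> p < q -> p + q <= size w -> per w (q - p).
Proof.
move=> Pp Pq lt le x0 i Hi.
case: (ltnP (i + q) (size w)) => h.
  rewrite (Pq x0 i h).
  have -> : i + q = (i + (q - p)) + p by lia.
  by rewrite -Pp //; lia.
have -> : i = (i - p) + p by lia.
rewrite -Pp; last by lia.
have -> : i - p + p + (q - p) = (i - p) + q by lia.
by rewrite Pq //; lia.
Qed.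

Lemma per_gcd (A : Type) (w : seq A) k : forall p q,
  p + q <= k -> per w p -> per w q -> p + q <= size w -> per w (gcdn p q).
Proof.
elim: k => [|k IH] p q Hk Pp Pq Hs.
  by move: Hk; rewrite leqn0 addn_eq0 => /andP[/eqP-> /eqP->] x0 i _; rewrite addn0.
case: (posnP p) => [->|p0]; first by rewrite gcd0n.
case: (posnP q) => [->|q0]; first by rewrite gcdn0.
case: (ltngtP p q) => c.
- have -> : gcdn p q = gcdn p (q - p).
    by rewrite -{1}(subnK (ltnW c)) gcdnDr.
  have P2 : per w (q - p) by apply: per_sub.
  apply: IH => //; rewrite subnKC ?(ltnW c) //; lia.
- have -> : gcdn p q = gcdn (p - q) q.
    by rewrite -{1}(subnK (ltnW c)) gcdnC gcdnDr gcdnC.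
  have P2 : per w (p - q) by apply: per_sub => //; rewrite addnC.
  apply: IH => //; rewrite subnK ?(ltnW c) //; lia.
- by rewrite c gcdnn.
Qed.

Lemma per_mul (A : Type) (w : seq A) d k : per w d -> per w (k * d).
Proof.
move=> P; elim: k => [|k IH] x0 i Hi; first by rewrite mul0n addn0.
rewrite mulSnr addnA in Hi *.
have H1 : i + k * d < size w by apply: leq_ltn_trans Hi; rewrite leq_addr.
by rewrite (IH x0 i H1) (P x0 (i + k * d) Hi).
Qed.

Lemma gcd_valid (A : finType) (L : seq A -> Prop) (w : seq A) q q' :
  is_language L -> valid_step L w q' -> valid_step L w q -> q' < q ->
  valid_step L w (gcdn q q').
Proof.
case=> _ _ Hsub _ [h2 h1' h2' E' L'] [_ h1 h2q E Lq] lt.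
set d := gcdn q q'.
have d0 : 0 < d by rewrite gcdn_gt0 h1.
have dq' : d <= q' by apply: dvdn_leq => //; exact: dvdn_gcdr.
have dq : d <= q by apply: dvdn_leq => //; exact: dvdn_gcdl.
have Pd : per w d.
  apply: per_gcd (leqnn _) _ _ _; [exact: per_of_eq | exact: per_of_eq | lia].
split => //; first by lia.
  exact: eq_of_per.
move: Lq => /= Lq.
have Hk : q - d = (q %/ d - 1) * d.
  rewrite mulnBl mul1n divnK //; exact: dvdn_gcdl.
have qn : q <= size w by move: h2q; rewrite -addnn; lia.
have Ed : drop (q - d) (take q w) = take d w.
  case: w h2 Pd qn {E' L' E Lq h2' h2q} => [//|x0 s] h2 Pd qn.
  apply: (@eq_from_nth _ x0).
    rewrite size_drop !size_takel //; last by apply: leq_trans qn.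
    by rewrite subKn.
  move=> i; rewrite size_drop size_takel // subKn // => Hi.
  rewrite nth_drop !nth_take //; last by rewrite -ltn_subRL subKn.
  have H : i + (q %/ d - 1) * d < size (x0 :: s).
    rewrite -Hk; apply: leq_trans qn; rewrite addnC -ltn_subRL subKn //.
  by rewrite (@per_mul _ _ d (q %/ d - 1) Pd x0 i H) -Hk addnC.
apply: (Hsub (take (q - d) w) _ [::]).
  rewrite cats0 catA -Ed -(take_takel w (leq_subr d q)) cat_take_drop.
  exact: Lq.
move/(congr1 size); rewrite size_cat /=; lia.
Qed.

Theorem mainTheorem11 (A : finType) (L : seq A -> Prop) (n : nat) (w : seq A) :
  is_language L -> L w -> size w = n ->
  (forall q q' : nat, valid_step L w q' -> valid_step L w q -> q' < q ->
     valid_step L w (gcdn q q'))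
  /\ (forall m : nat, minimal_step L w m ->
        forall q : nat, valid_step L w q -> m %| q).
Proof.
move=> HL _ _; split; first by move=> q q'; exact: gcd_valid.
move=> m [Vm Mm] q Vq.
case: (ltngtP m q) => c.
- have V := @gcd_valid _ _ _ _ _ HL Vm Vq c.
  have g1 := Mm _ V.
  have g0 : 0 < q by case: Vq.
  have g2 : gcdn q m <= m by apply: dvdn_leq; [case: Vm | exact: dvdn_gcdr].
  have -> : m = gcdn q m by apply/eqP; rewrite eqn_leq g1 g2.
  exact: dvdn_gcdl.
- by have := Mm _ Vq; lia.
- by rewrite c.
Qed.
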